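(* Let $\ell\ge1$ and $D\ge0$, let $d$ be a distortion function on $\mathcal{X}^\ell\times\hat{\mathcal{X}}^\ell$, and let $Q:\mathcal{X}^\ell\to\hat{\mathcal{X}}^\ell$ satisfy $d(x^\ell,Q(x^\ell))\le\ell D$ for all $x^\ell$. Let $(f,g)$ be an IL FS encoder with $s$ states over the input alphabet $\hat{\mathcal{X}}^\ell$ (each $\ell$-block $\hat x^\ell$ being one input symbol), with output function $f:\mathcal{Z}\times\hat{\mathcal{X}}^\ell\to\mathcal{Y}$ and next-state function $g:\mathcal{Z}\times\hat{\mathcal{X}}^\ell\to\mathcal{Z}$. Define the $s\times s$ matrices $$K_{zz'}=\sum_{\{x^\ell\in\mathcal{X}^\ell:\ g(z,Q(x^\ell))=z'\}}2^{-L[f(z,Q(x^\ell))]},\qquad \hat K_{zz'}=\sum_{\{\hat x^\ell\in\hat{\mathcal{X}}^\ell:\ g(z,\hat x^\ell)=z'\}}2^{-L[f(z,\hat x^\ell)]}.$$ Let $\mathcal{B}(\hat x^\ell)=\{x^\ell\in\mathcal{X}^\ell: d(x^\ell,\hat x^\ell)\le\ell D\}$ and $B_\ell=\max_{\hat x^\ell\in\hat{\mathcal{X}}^\ell}|\mathcal{B}(\hat x^\ell)|$. Then $K\le B_\ell\hat K$ entrywise, and $\rho(K)\le B_\ell$.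
   Context: An FS encoder over a finite input alphabet $\mathcal{A}$ consists of a finite set $\mathcal{Z}$ of $s$ states, a finite set $\mathcal{Y}$ of binary strings (possibly including the empty string), an output function $f:\mathcal{Z}\times\mathcal{A}\to\mathcal{Y}$ and a next-state function $g:\mathcal{Z}\times\mathcal{A}\to\mathcal{Z}$; for $z\in\mathcal{Z}$ and $a^n\in\mathcal{A}^n$, with $z_1=z$, $z_{i+1}=g(z_i,a_i)$, $g(z,a^n)=z_{n+1}$ and $f(z,a^n)$ is the concatenated binary string $f(z_1,a_1)\cdots f(z_n,a_n)$ with length $L[f(z,a^n)]=\sum_i L[f(z_i,a_i)]$. It is information lossless (IL) if for every $z$ and $n$ the map $a^n\mapsto(f(z,a^n),g(z,a^n))$ is injective on $\mathcal{A}^n$. $\rho(\cdot)$ denotes spectral radius. *)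

(* Defs.v *)
From HB Require Import structures.
From mathcomp Require Import all_boot all_order all_algebra.
From mathcomp Require Import reals.
From mathcomp Require Import complex.
Set Implicit Arguments. Unset Strict Implicit. Unset Printing Implicit Defensive.
Import Order.TTheory GRing.Theory Num.Theory.
Local Open Scope ring_scope.

Fixpoint fs_out (A : Type) (s : nat) (f : 'I_s -> A -> seq bool)
  (g : 'I_s -> A -> 'I_s) (z : 'I_s) (w : seq A) : seq bool :=
  match w with
  | [::] => [::]
  | a :: w' => f z a ++ fs_out f g (g z a) w'
  end.

Fixpoint fs_state (A : Type) (s : nat) (g : 'I_s -> A -> 'I_s)
  (z : 'I_s) (w : seq A) : 'I_s :=
  match w with
  | [::] => z
  | a :: w' => fs_state g (g z a) w'
  end.

Definition IL_encoder (A : finType) (s : nat) (f : 'I_s -> A -> seq bool)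
  (g : 'I_s -> A -> 'I_s) : Prop :=
  forall (z : 'I_s) (n : nat),
    injective (fun w : n.-tuple A => (fs_out f g z w, fs_state g z w)).

Definition spectral_radius_le (R : rcfType) (s : nat) (M : 'M[R]_s) (r : R)
  : Prop :=
  forall lam : R[i], eigenvalue (map_mx (fun x : R => (x%:C)%C) M) lam ->
    `|lam| <= (r%:C)%C.

(* Main.v *)
Require Import Defs.
From HB Require Import structures.
From mathcomp Require Import all_boot all_order all_algebra.
From mathcomp Require Import reals.
From mathcomp Require Import complex.
From mathcomp Require Import ring lra zify.
Import Order.TTheory GRing.Theory Num.Theory.
Local Open Scope ring_scope.

Lemma tuple_sum_cons (R : nmodType) (A : finType) n
  (P : pred (n.+1.-tuple A)) (F : n.+1.-tuple A -> R) :
  \sum_(t | P t) F t =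
  \sum_a \sum_(w : n.-tuple A | P (cons_tuple a w)) F (cons_tuple a w).
Proof.
rewrite (reindex (fun p : A * n.-tuple A => cons_tuple p.1 p.2)) /=.
  by rewrite pair_big_dep; apply: eq_bigl => -[a w].
exists (fun t => (thead t, behead_tuple t)) => [[a w] _ | t _] /=.
  by congr pair; apply: val_inj.
by apply: val_inj => /=; case: t => -[|a w] //=.
Qed.

Definition Pn (R : realType) (A : finType) s (f : 'I_s -> A -> seq bool)
  (g : 'I_s -> A -> 'I_s) n (z z' : 'I_s) : R :=
  \sum_(w : n.-tuple A | fs_state g z w == z') 2%:R ^- size (fs_out f g z w).
Arguments Pn {R A s} f g n z z'.

Lemma Pn_rec (R : realType) (A : finType) s (f : 'I_s -> A -> seq bool)
  (g : 'I_s -> A -> 'I_s) n (z z'' : 'I_s) :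
  Pn (R:=R) f g n.+1 z z'' =
  \sum_z' (\sum_(a | g z a == z') 2%:R ^- size (f z a)) * Pn (R:=R) f g n z' z''.
Proof.
rewrite /Pn tuple_sum_cons /=.
rewrite (partition_big (fun a => g z a) xpredT) //=.
apply: eq_bigr => z' _; rewrite big_distrl /=.
apply: eq_bigr => a /eqP <-; rewrite big_distrr /=.
apply: eq_bigr => w _.
by rewrite size_cat exprD invfM.
Qed.

Lemma Pn_sum (R : realType) (A : finType) s (f : 'I_s -> A -> seq bool)
  (g : 'I_s -> A -> 'I_s) n (z : 'I_s) :
  \sum_z'' Pn (R:=R) f g n z z'' = \sum_(w : n.-tuple A) 2%:R ^- size (fs_out f g z w).
Proof.
rewrite /Pn; symmetry; rewrite (partition_big (fun w : n.-tuple A => fs_state g z w) xpredT) //=.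
Qed.

Lemma Pn0 (R : realType) (A : finType) s (f : 'I_s -> A -> seq bool)
  (g : 'I_s -> A -> 'I_s) (z z' : 'I_s) :
  Pn (R:=R) f g 0 z z' = (z == z')%:R.
Proof.
rewrite /Pn; have [<-|ne] := eqVneq z z'.
  rewrite (big_pred1 [tuple]) /= ?expr0 ?invr1 // => w.
  by rewrite tuple0 /= !eqxx.
by rewrite big_pred0 // => w; rewrite tuple0 /=; apply/negbTE.
Qed.

Lemma size_out (A : finType) s (f : 'I_s -> A -> seq bool)
  (g : 'I_s -> A -> 'I_s) (w : seq A) (z : 'I_s) :
  (size (fs_out f g z w) <= size w * \max_(p : 'I_s * A) size (f p.1 p.2))%N.
Proof.
elim: w z => [|a w IH] z //=.
rewrite size_cat mulSn leq_add //.
exact: (leq_bigmax_cond (z, a)).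
Qed.

Lemma T_bound (R : realType) (A : finType) s (f : 'I_s -> A -> seq bool)
  (g : 'I_s -> A -> 'I_s) n (z : 'I_s) :
  IL_encoder f g ->
  \sum_(w : n.-tuple A) 2%:R ^- size (fs_out f g z w) <=
  (s * (n * \max_(p : 'I_s * A) size (f p.1 p.2)).+1)%:R :> R.
Proof.
move=> IL.
set M := \max_(p : 'I_s * A) _.
set N := (n * M).+1.
rewrite (partition_big (fun w : n.-tuple A => (inord (size (fs_out f g z w)) : 'I_N)) xpredT) //=.
apply: (@le_trans _ _ (\sum_(k < N) (s%:R : R))); last first.
  by rewrite sumr_const card_ord natrM mulr_natr.
apply: ler_sum => k _.
pose S := [set w : n.-tuple A | size (fs_out f g z w) == k].
rewrite (eq_bigl (fun w => w \in S)); last first.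
  move=> w; rewrite inE -(inj_eq val_inj) /= inordK //.
  by rewrite ltnS (leq_trans (size_out _ _ f g w z)) // size_tuple.
rewrite (eq_bigr (fun _ => 2%:R ^- k)); last by move=> w; rewrite inE => /eqP ->.
rewrite sumr_const.
have cardS : (#|S| <= s * 2 ^ k)%N.
  pose phi (w : n.-tuple A) :=
    (insubd (nseq_tuple k false) (fs_out f g z w) : k.-tuple bool, fs_state g z w).
  have inj : {in S &, injective phi}.
    move=> w1 w2; rewrite !inE => /eqP h1 /eqP h2 [e1 e2].
    apply: (IL z n) => /=; congr pair => //.
    have := congr1 val e1; rewrite !val_insubd /= h1 h2 eqxx.
    by [].
  rewrite -(card_in_imset inj); apply: leq_trans (max_card _) _.
  by rewrite card_prod card_tuple card_bool card_ord mulnC.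
rewrite -(mulr_natl (2%:R ^- k) #|S|).
apply: le_trans (_ : (s * 2 ^ k)%:R * 2%:R ^- k <= _).
  by rewrite ler_wpM2r ?invr_ge0 ?exprn_ge0 ?ler0n // ler_nat.
by rewrite natrM natrX mulfK // expf_neq0 // pnatr_eq0.
Qed.
Lemma bernoulli_le (R : realType) (e : R) m : 0 <= e -> 1 + m%:R * e <= (1 + e) ^+ m.
Proof.
move=> e0; elim: m => [|m IH]; first by rewrite mul0r addr0 expr0.
rewrite exprSr -natr1.
have h : 0 <= m%:R * e by rewrite mulr_ge0 ?ler0n.
have h2 : (1 + m%:R * e) * (1 + e) <= (1 + e) ^+ m * (1 + e).
  by rewrite ler_wpM2r // addr_ge0.
have h3 : 0 <= m%:R * e * e by rewrite mulr_ge0.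
set X := (1 + e) ^+ m in IH h2 *.
set mR := (m%:R : R) in h h2 h3 *.
apply: le_trans h2; rewrite mulrDr mulr1 mulrDl mul1r mulrDl mul1r.
by rewrite addrA [X in _ <= X]addrA lerDl.
Qed.

Lemma growth (R : realType) (r b c : R) : 0 <= r -> 0 <= b -> 0 <= c ->
  (forall n, r ^+ n <= b ^+ n * (c * n.+1%:R)) -> r <= b.
Proof.
move=> r0 b0 c0 H; rewrite leNgt; apply/negP => brr.
have [b00|bpos] := eqVneq b 0.
  have := H 1%N; rewrite b00 expr1 mul0r; lra.
have bp : 0 < b by rewrite lt_neqAle eq_sym bpos b0.
set t := r / b; set e := t - 1.
have rtb : r = (1 + e) * b by rewrite /e /t addrC subrK mulfVK.
have ep : 0 < e by rewrite /e subr_gt0 /t ltr_pdivlMr // mul1r.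
set m := (Num.Def.archi_bound (3%:R * c / (e * e))).+1.
have hm : 3%:R * c / (e * e) < m%:R.
  apply: lt_le_trans (archi_boundP _) _; first by rewrite divr_ge0 ?mulr_ge0 ?ler0n // ltW.
  by rewrite ler_nat.
have hm' : 3%:R * c < m%:R * (e * e).
  by rewrite -ltr_pdivrMr // mulr_gt0.
have m1 : 1 <= m%:R :> R by rewrite ler1n.
have := H (m + m)%N.
rewrite rtb exprMn mulrC ler_pM2l ?exprn_gt0 //.
rewrite exprD.
have := bernoulli_le _ e m (ltW ep).
set X := (1 + e) ^+ m.
rewrite -natr1 natrD.
set mR := (m%:R : R) in hm' m1 *.
move=> h1 h2.
have hX : (1 + mR * e) * (1 + mR * e) <= X * X.
  by apply: ler_pM => //; rewrite addr_ge0 // mulr_ge0 // ?ler0n ltW.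
have h4 : 3%:R * c * mR < mR * (e * e) * mR.
  by rewrite ltr_pM2r // (lt_le_trans ltr01 m1).
clearbody X mR t e m.
nra.
Qed.

Lemma normC_re (R : rcfType) (x : R[i]) : `|x| = (complex.Re `|x|)%:C%C.
Proof. by rewrite normc_def. Qed.

Lemma normC_re_ge0 (R : rcfType) (x : R[i]) : 0 <= complex.Re `|x|.
Proof. by rewrite -ler0c -normC_re. Qed.

Theorem mainTheorem9 (R : realType) (X Xh : finType) (l : nat) (D : R)
  (d : {ffun 'I_l -> X} -> {ffun 'I_l -> Xh} -> R)
  (Q : {ffun 'I_l -> X} -> {ffun 'I_l -> Xh})
  (s : nat) (f : 'I_s -> {ffun 'I_l -> Xh} -> seq bool)
  (g : 'I_s -> {ffun 'I_l -> Xh} -> 'I_s) :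
  (1 <= l)%N -> 0 <= D ->
  (forall x xh, 0 <= d x xh) ->
  (forall x, d x (Q x) <= l%:R * D) ->
  IL_encoder f g ->
  let K : 'M[R]_s := \matrix_(z, z')
      \sum_(x : {ffun 'I_l -> X} | g z (Q x) == z') 2%:R ^- size (f z (Q x)) in
  let Kh : 'M[R]_s := \matrix_(z, z')
      \sum_(xh : {ffun 'I_l -> Xh} | g z xh == z') 2%:R ^- size (f z xh) in
  let B : nat := (\max_(xh : {ffun 'I_l -> Xh})
      #|[set x : {ffun 'I_l -> X} | (d x xh <= l%:R * D)%R]|)%N in
  (forall z z', K z z' <= B%:R * Kh z z') /\ spectral_radius_le K B%:R.
Proof.
move=> l1 D0 d0 dQ IL K Kh B.
have c0 : forall k : nat, 0 <= 2%:R ^- k :> R.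
  by move=> k; rewrite invr_ge0 exprn_ge0 ?ler0n.
have K0 : forall z z', 0 <= K z z'.
  by move=> z z'; rewrite /K mxE sumr_ge0.
have Kh0 : forall z z', 0 <= Kh z z'.
  by move=> z z'; rewrite /Kh mxE sumr_ge0.
have part1 : forall z z', K z z' <= B%:R * Kh z z'.
  move=> z z'; rewrite /K /Kh !mxE.
  rewrite (partition_big Q (fun xh => g z xh == z')) => [|x //].
  rewrite big_distrr /=; apply: ler_sum => xh hxh.
  pose S := [set x | Q x == xh].
  rewrite (eq_bigl (fun x => x \in S)); last first.
    by move=> x; rewrite inE andb_idl // => /eqP ->.
  rewrite (eq_bigr (fun _ => 2%:R ^- size (f z xh))); last first.
    by move=> x; rewrite inE => /eqP ->.
  rewrite sumr_const -(mulr_natl _ #|S|) ler_wpM2r // ler_nat.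
  apply: leq_trans (_ : #|[set x | (d x xh <= l%:R * D)%R]| <= B)%N.
    apply: subset_leq_card; apply/subsetP => x; rewrite !inE => /eqP <-.
    exact: dQ.
  exact: (leq_bigmax_cond xh).
split => //.
move=> lam /eigenvalueP [v hv vnz].
set rl := complex.Re `|lam|.
pose uR z := complex.Re `|v 0 z|.
have uR0 : forall z, 0 <= uR z by move=> z; exact: normC_re_ge0.
have rl0 : 0 <= rl by exact: normC_re_ge0.
have stepA : forall z', rl * uR z' <= \sum_z uR z * K z z'.
  move=> z'.
  have := congr1 (fun M : 'rV_s => M 0 z') hv; rewrite !mxE => e.
  rewrite -lecR rmorphM /= rmorph_sum /= -!normC_re -normrM -e.
  apply: le_trans (ler_norm_sum _ _ _) _.
  apply: ler_sum => z _; rewrite mxE normrM rmorphM /= -normC_re.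
  by rewrite (ger0_norm (x := (K z z')%:C%C)) // ler0c.
have stepB : forall z', rl * uR z' <= B%:R * \sum_z uR z * Kh z z'.
  move=> z'; apply: le_trans (stepA z') _.
  rewrite big_distrr /=; apply: ler_sum => z _.
  by rewrite mulrCA ler_wpM2l.
have P0 : forall n z z', 0 <= Pn (R:=R) f g n z z'.
  by move=> n z z'; rewrite /Pn sumr_ge0.
have ind : forall n z'', rl ^+ n * uR z'' <=
    B%:R ^+ n * \sum_z uR z * Pn (R:=R) f g n z z''.
  elim => [|n IH] z''.
    rewrite expr0 !mul1r (bigD1 z'') //= Pn0 eqxx mulr1 lerDl.
    by rewrite sumr_ge0 // => z _; rewrite mulr_ge0.
  rewrite exprS -mulrA.
  apply: le_trans (_ : rl * (B%:R ^+ n * \sum_z uR z * Pn f g n z z'') <= _).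
    by rewrite ler_wpM2l.
  rewrite mulrCA big_distrr /=.
  apply: le_trans (_ : B%:R ^+ n * \sum_z' (B%:R * \sum_z uR z * Kh z z') * Pn f g n z' z'' <= _).
    rewrite ler_wpM2l ?exprn_ge0 ?ler0n //; apply: ler_sum => z' _.
    by rewrite mulrA ler_wpM2r.
  rewrite exprS -mulrA [X in _ <= X]mulrCA ler_wpM2l ?exprn_ge0 ?ler0n //.
  rewrite le_eqVlt; apply/orP; left; apply/eqP.
  rewrite (eq_bigr (fun z' => B%:R * ((\sum_z uR z * Kh z z') * Pn f g n z' z''))); last first.
    by move=> z' _; rewrite mulrA.
  rewrite -big_distrr /=; congr (_ * _).
  rewrite [RHS](eq_bigr (fun z => \sum_z' uR z * ((\sum_(a | g z a == z') 2%:R ^- size (f z a)) * Pn f g n z' z''))); last first.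
    by move=> z _; rewrite Pn_rec big_distrr.
  rewrite exchange_big /=; apply: eq_bigr => z' _.
  rewrite big_distrl /=; apply: eq_bigr => z _.
  by rewrite /Kh mxE mulrA.
set M := \max_(p : 'I_s * {ffun 'I_l -> Xh}) size (f p.1 p.2).
have [z0 hz0] : exists z0, v 0 z0 != 0.
  case: (pickP (fun z => v 0 z != 0)) => [z hz|h]; first by exists z.
  case/eqP: vnz; apply/rowP => j; rewrite !mxE.
  by have := h j => /negbFE/eqP.
set U := \sum_z uR z.
have Upos : 0 < U.
  apply: lt_le_trans (_ : uR z0 <= U).
    have : 0 < `|v 0 z0| by rewrite normr_gt0.
    by rewrite normC_re -[0 in X in X -> _]/((0:R)%:C)%C ltcR.
  by rewrite /U (bigD1 z0) //= lerDl sumr_ge0.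
have key : forall n, rl ^+ n <= B%:R ^+ n * ((s * M.+1)%:R * n.+1%:R).
  move=> n.
  have h : rl ^+ n * U <= B%:R ^+ n * ((s * (n * M).+1)%:R * U).
    rewrite /U big_distrr /=.
    apply: le_trans (_ : \sum_z'' B%:R ^+ n * \sum_z uR z * Pn f g n z z'' <= _).
      by apply: ler_sum => z'' _; exact: ind.
    rewrite -big_distrr /= ler_wpM2l ?exprn_ge0 ?ler0n // exchange_big /= big_distrr /=.
    apply: ler_sum => z _; rewrite -big_distrr /= Pn_sum mulrC ler_wpM2r //.
    exact: T_bound.
  have h2 : rl ^+ n <= B%:R ^+ n * (s * (n * M).+1)%:R.
    by rewrite -(ler_pM2r Upos) -mulrA.
  apply: le_trans h2 _; rewrite ler_wpM2l ?exprn_ge0 ?ler0n // -natrM ler_nat.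
  nia.
have := growth R rl B%:R (s * M.+1)%:R rl0 (ler0n _ _) (ler0n _ _) key.
by rewrite normC_re lecR.
Qed.
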